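(* Let $p$ be a prime, $n = ms$, and $B \in \mathbb{Z}_p^{n\times n}$ nonsingular, and let $u\in\mathbb{Z}_p^{s\times n}$, $v\in\mathbb{Z}_p^{n\times s}$ be such that $U$ (block rows $u, uB, \dots, uB^{m-1}$) and $V = [v \mid Bv\mid\cdots\mid B^{m-1}v]$ are nonsingular, and let $H = UBV$. Suppose: (i) for any $w \in \mathbb{Z}_p^{n}$ the product $Bw$ can be computed with $\mu(n)$ operations in $\mathbb{Z}_p$; (ii) for any $w\in\mathbb{Z}_p^n$ and $x \in \mathbb{Z}_p^{s}$ the products $uw$ and $vx$ can be computed with $\tilde O(n)$ operations in $\mathbb{Z}_p$; (iii) a representation of $H^{-1}$ has been precomputed which allows $H^{-1}y$ to be computed for any $y \in \mathbb{Z}_p^n$ with $\tilde O(ns)$ operations in $\mathbb{Z}_p$. Then for any $w \in \mathbb{Z}_p^{n}$, the vector $B^{-1}w$ can be computed with $2(m-1)\mu(n) + \tilde O(n(m+s))$ operations in $\mathbb{Z}_p$.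
   Context: $\tilde O(f)$ denotes $O(f \cdot (\log f)^{c})$ for some constant $c$, i.e. big-O up to polylogarithmic factors. *)

(* Defs.v *)
From HB Require Import structures.
From mathcomp Require Import all_boot all_order all_algebra.
Set Implicit Arguments. Unset Strict Implicit. Unset Printing Implicit Defensive.
Import Order.TTheory GRing.Theory Num.Theory.
Local Open Scope ring_scope.

(* Every instruction counts as
   one operation in the field (constants included, which is conservative).
   Out-of-range register references read 0. *)

Inductive instr (F : Type) :=
  | IAdd of nat & nat
  | ISub of nat & nat
  | IMul of nat & nat
  | IInv of nat
  | ICst of F.

Section SLP.
Variable F : fieldType.

Definition step (regs : seq F) (ins : instr F) : F :=
  match ins with
  | IAdd i j => nth 0 regs i + nth 0 regs j
  | ISub i j => nth 0 regs i - nth 0 regs j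
  | IMul i j => nth 0 regs i * nth 0 regs j
  | IInv i => (nth 0 regs i)^-1
  | ICst c => c
  end.

Fixpoint run (regs : seq F) (code : seq (instr F)) : seq F :=
  match code with
  | [::] => regs
  | ins :: code' => run (rcons regs (step regs ins)) code'
  end.

Record slp := SLP { slp_code : seq (instr F); slp_out : seq nat }.

Definition slp_cost (P : slp) : nat := size (slp_code P).

Definition slp_inputs k (x : 'cV[F]_k) : seq F := [seq x i 0 | i <- enum 'I_k].

Definition slp_computes k l (P : slp) (f : 'cV[F]_k -> 'cV[F]_l) : Prop :=
  size (slp_out P) = l /\
  forall (x : 'cV[F]_k) (i : 'I_l),
    nth 0 (run (slp_inputs x) (slp_code P)) (nth 0%N (slp_out P) i) = f x i 0.

End SLP.

Definition lg (f : nat) : nat := (trunc_log 2 f).+1.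

Lemma sum_const_block (m s : nat) : (\sum_(i < m) s)%N = (m * s)%N.
Proof. by rewrite sum_nat_const card_ord. Qed.

Definition krylovU (R : pzRingType) (m s : nat) (B : 'M[R]_(m * s))
    (u : 'M[R]_(s, m * s)) : 'M[R]_(m * s) :=
  castmx (sum_const_block m s, erefl (m * s)%N)
    (@mxcol R m (fun _ => s) (m * s)%N (fun i => u *m B ^+ i)).

Definition krylovV (R : pzRingType) (m s : nat) (B : 'M[R]_(m * s))
    (v : 'M[R]_(m * s, s)) : 'M[R]_(m * s) :=
  castmx (erefl (m * s)%N, sum_const_block m s)
    (@mxrow R m (fun _ => s) (m * s)%N (fun i => B ^+ i *m v)).

(* Main.v *)
Require Import Defs.
From HB Require Import structures.
From mathcomp Require Import all_boot all_order all_algebra.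
Import GRing.Theory Num.Theory.
Local Open Scope ring_scope.
From mathcomp Require Import zify.
Set Implicit Arguments. Unset Strict Implicit. Unset Printing Implicit Defensive.

Section Infra.
Variable F : fieldType.
Implicit Types (R r : seq F) (c : seq (instr F)).

Definition shiftI (b : nat) (ins : instr F) : instr F :=
  match ins with
  | IAdd i j => IAdd F (b + i) (b + j)
  | ISub i j => ISub F (b + i) (b + j)
  | IMul i j => IMul F (b + i) (b + j)
  | IInv i => IInv F (b + i)
  | ICst x => ICst x
  end.

Definition readsb (N : nat) (ins : instr F) : bool :=
  match ins with
  | IAdd i j => (i < N)%N && (j < N)%N
  | ISub i j => (i < N)%N && (j < N)%N
  | IMul i j => (i < N)%N && (j < N)%N
  | IInv i => (i < N)%N
  | ICst _ => true
  end.

Lemma run_cat r c1 c2 : run r (c1 ++ c2) = run (run r c1) c2.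
Proof. by elim: c1 r => //= i c1 IH r. Qed.

Lemma size_run r c : size (run r c) = (size r + size c)%N.
Proof. by elim: c r => [|i c IH] r /=; rewrite ?addn0 // IH size_rcons addSnnS. Qed.

Lemma nth_run_lt r c j : (j < size r)%N -> nth 0 (run r c) j = nth 0 r j.
Proof.
elim: c r => //= i c IH r lt.
have lt' : (j < size (rcons r (step r i)))%N by rewrite size_rcons ltnS ltnW.
by rewrite (IH _ lt') nth_rcons lt.
Qed.

Lemma step_cat R t ins : readsb (size R) ins -> step (R ++ t) ins = step R ins.
Proof.
case: ins => [i j|i j|i j|i|x] //=; try (case/andP=> hi hj; rewrite !nth_cat hi hj //).
by move=> hi; rewrite nth_cat hi.
Qed.

Lemma run_local R c : all (readsb (size R)) c -> run R c = R ++ map (step R) c.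
Proof.
suff: forall t, all (readsb (size R)) c -> run (R ++ t) c = R ++ t ++ map (step R) c.
  by move=> /(_ [::]); rewrite cats0.
elim: c => [|i c IH] t /=; first by rewrite cats0.
move=> /andP[ri rc]; rewrite step_cat // -cats1 -catA IH //.
by rewrite -catA.
Qed.

Lemma nth_rcons0 R a j : nth 0 (rcons R a) j =
  if (j < size R)%N then nth 0 R j else if j == size R then a else 0.
Proof. by rewrite nth_rcons. Qed.

Lemma run_shift b c : forall R r, size R = (b + size r)%N ->
  (forall j, nth 0 R (b + j) = nth 0 r j) ->
  size (run R (map (shiftI b) c)) = (b + size (run r c))%N /\
  forall j, nth 0 (run R (map (shiftI b) c)) (b + j) = nth 0 (run r c) j.
Proof.
elim: c => [|i c IH] R r sz eq /=; first by split.
apply: IH; first by rewrite !size_rcons sz addnS.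
have -> : step R (shiftI b i) = step r i by case: i => *; rewrite /= ?eq.
move=> j; rewrite !nth_rcons0 sz ltn_add2l eqn_add2l eq.
by [].
Qed.

Lemma map_nth_iotaC R t : map (nth 0 (R ++ t)) (iota (size R) (size t)) = t.
Proof.
apply: (@eq_from_nth _ 0); rewrite size_map size_iota // => i lt.
by rewrite (nth_map 0%N) ?size_iota // nth_iota // nth_cat ltnNge leq_addr /= addKn.
Qed.


Lemma size_inputs k (x : 'cV[F]_k) : size (slp_inputs x) = k.
Proof. by rewrite size_map size_enum_ord. Qed.

Lemma nth_inputs k (x : 'cV[F]_k) (i : 'I_k) : nth 0 (slp_inputs x) i = x i 0.
Proof. by rewrite (nth_map i) ?size_enum_ord // nth_ord_enum. Qed.

Definition vals R (ix : seq nat) (vs : seq F) :=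
  all (fun j => j < size R)%N ix /\ map (nth 0 R) ix = vs.

Definition holds R ix k (x : 'cV[F]_k) := vals R ix (slp_inputs x).

Lemma vals_run R ix vs c : vals R ix vs -> vals (run R c) ix vs.
Proof.
case=> /allP a e; split.
  by apply/allP=> j /a lt; rewrite size_run (leq_trans lt) ?leq_addr.
by rewrite -e; apply/eq_in_map => j /a lt; rewrite nth_run_lt.
Qed.

Lemma vals_cat R a b s1 s2 : vals R a s1 -> vals R b s2 -> vals R (a ++ b) (s1 ++ s2).
Proof. by case=> a1 e1 [b1 e2]; split; rewrite ?all_cat ?a1 ?b1 // map_cat e1 e2. Qed.

Lemma vals_sub R ix vs a b : vals R ix vs -> vals R (take a (drop b ix)) (take a (drop b vs)).
Proof.
case=> al e; split; last by rewrite map_take map_drop e.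
by apply/allP=> j /mem_take /mem_drop; apply: (allP al).
Qed.

Definition callc (z N : nat) (ins : seq nat) (P : slp F) : seq (instr F) :=
  map (fun j => IAdd F j z) ins ++ map (shiftI N) (slp_code P) ++
  map (fun o => if (o < size ins + slp_cost P)%N then IAdd F (N + o) z else ICst 0)
      (slp_out P).

Lemma size_callc z N ins P :
  size (callc z N ins P) = (size ins + slp_cost P + size (slp_out P))%N.
Proof. by rewrite /callc !size_cat !size_map addnA. Qed.

Lemma call_ok k l (P : slp F) (f : 'cV[F]_k -> 'cV[F]_l) z R ins x :
  slp_computes P f -> (z < size R)%N -> nth 0 R z = 0 -> holds R ins x ->
  size (run R (callc z (size R) ins P)) = (size R + k + slp_cost P + l)%N /\
  holds (run R (callc z (size R) ins P)) (iota (size R + k + slp_cost P) l) (f x).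
Proof.
move=> [so HP] zlt z0 [al e].
have sins : size ins = k by rewrite -(size_map (nth 0 R)) e size_inputs.
rewrite /callc !run_cat.
set R1 := run R _.
have R1E : R1 = R ++ slp_inputs x.
  rewrite /R1 run_local; last first.
    by rewrite all_map; apply/allP=> j /(allP al) jl /=; rewrite jl zlt.
  by rewrite -e -map_comp; congr (_ ++ _); apply: eq_map => j /=; rewrite z0 addr0.
set r := slp_inputs x.
have h1 : size R1 = (size R + size r)%N by rewrite R1E size_cat.
have h2 : forall j, nth 0 R1 (size R + j) = nth 0 r j.
  by move=> j; rewrite R1E nth_cat ltnNge leq_addr /= addKn.
have [sz2 n2] := run_shift (slp_code P) h1 h2.
set R2 := run R1 _ in sz2 n2 *.
have szr : size (run r (slp_code P)) = (k + slp_cost P)%N by rewrite size_run size_inputs.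
rewrite szr in sz2.
rewrite run_local; last first.
  rewrite all_map; apply/allP=> o _ /=; case: ifP => //= lt; rewrite sins in lt.
  by rewrite sz2 ltn_add2l lt (leq_trans zlt) ?leq_addr.
rewrite -map_comp; set t := map _ (slp_out P).
have st : size t = l by rewrite size_map so.
have szR2 : size R2 = (size R + k + slp_cost P)%N by rewrite sz2 addnA.
split; first by rewrite size_cat st szR2.
split.
  apply/allP=> j; rewrite mem_iota size_cat szR2 st => /andP[_ ->] //.
have := map_nth_iotaC R2 t; rewrite st szR2 => ->.
apply: (@eq_from_nth _ 0); rewrite ?st ?size_inputs // => i lt.
rewrite (nth_map 0%N) ?so // sins.
have := HP x (Ordinal lt); rewrite -nth_inputs /= => <-.
have zR : nth 0 R2 z = 0.
  by rewrite /R2 nth_run_lt R1E ?nth_cat ?zlt // size_cat (leq_trans zlt) ?leq_addr.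
case: ifP => [ol|]; rewrite /=; first by rewrite n2 zR addr0.
by move/negbT; rewrite -leqNgt -szr => ge; rewrite nth_default.
Qed.

Definition addc (a b : seq nat) : seq (instr F) :=
  [seq IAdd F (nth 0%N a i) (nth 0%N b i) | i <- iota 0 (size a)].

Lemma add_ok k R a b (x y : 'cV[F]_k) : holds R a x -> holds R b y ->
  size (run R (addc a b)) = (size R + k)%N /\
  holds (run R (addc a b)) (iota (size R) k) (x + y).
Proof.
move=> [aa ea] [ab eb].
have sa : size a = k by rewrite -(size_map (nth 0 R)) ea size_inputs.
have sb : size b = k by rewrite -(size_map (nth 0 R)) eb size_inputs.
rewrite run_local; last first.
  rewrite all_map; apply/allP=> j; rewrite mem_iota /= => lt.
  by rewrite (allP aa) ?(allP ab) ?mem_nth ?sb -?sa.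
rewrite -map_comp; set t := map _ _.
have st : size t = k by rewrite size_map size_iota.
split; first by rewrite size_cat st.
split.
  by apply/allP=> j; rewrite mem_iota size_cat st => /andP[_ ->].
have := map_nth_iotaC R t; rewrite st => ->.
apply: (@eq_from_nth _ 0); rewrite ?st ?size_inputs // => i lt.
rewrite (nth_map 0%N) ?size_iota ?sa // nth_iota //= add0n.
have -> := nth_inputs (x + y) (Ordinal lt); rewrite mxE /=.
rewrite -(nth_map 0%N 0 (nth 0 R)) ?sa // ea -(nth_map 0%N 0 (nth 0 R) (s := b)) ?sb // eb.
by rewrite !(nth_inputs _ (Ordinal lt)).
Qed.

End Infra.


Lemma nth_flatten_const T x0 (f : nat -> seq T) s : forall m a t r,
  (forall i, size (f i) = s) -> (r < s)%N -> (t < m)%N ->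
  nth x0 (flatten [seq f i | i <- iota a m]) (t * s + r) = nth x0 (f (a + t)%N) r.
Proof.
elim=> [|m IH] a t r sz rs; first by rewrite ltn0.
move=> tm /=.
rewrite nth_cat sz; case: t tm => [|t] tm.
  by rewrite mul0n add0n rs addn0.
by rewrite mulSn -addnA ltnNge leq_addr /= addKn IH // addSnnS.
Qed.

Lemma sum_lt_const m s i : (i <= m)%N -> (\sum_(k < m | (k < i)%N) s)%N = (i * s)%N.
Proof.
move=> im.
transitivity (\sum_(0 <= k < m | xpredT k && (k < i)%N) s)%N; first by rewrite big_mkord.
rewrite -big_nat_widen //.
by rewrite sum_nat_const_nat subn0.
Qed.

Lemma castmx_mulL (R : pzRingType) n1 n2 (e : n1 = n2) k p (A : 'M[R]_(n1, k)) (C : 'M_(k, p)) :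
  castmx (e, erefl k) A *m C = castmx (e, erefl p) (A *m C).
Proof. by case: n2 / e; rewrite !castmx_id. Qed.

Lemma castmx_mulM (R : pzRingType) n1 n2 (e : n1 = n2) k p (A : 'M[R]_(k, n1)) (C : 'M_(n1, p)) :
  castmx (erefl k, e) A *m castmx (e, erefl p) C = A *m C.
Proof. by case: n2 / e; rewrite !castmx_id. Qed.

Section Mat.
Variables (F : fieldType) (m s : nat).

Lemma Rank_val (i : 'I_m) (r : 'I_s) :
  nat_of_ord (@tagnat.Rank m (fun _ => s) i r) = (i * s + r)%N.
Proof. by rewrite tagnat.RankEsum sum_lt_const // ltnW. Qed.

Lemma U_inputs (B : 'M[F]_(m * s)) u (w : 'cV_(m * s)) :
  slp_inputs (krylovU B u *m w) =
  flatten [seq slp_inputs (u *m (B ^+ t *m w)) | t <- iota 0 m].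
Proof.
rewrite /krylovU castmx_mulL mxcol_mul.
apply: (@eq_from_nth _ 0).
  rewrite size_inputs size_flatten /shape -map_comp.
  rewrite (eq_map (g := fun _ => s)); last by move=> t /=; rewrite size_inputs.
  suff -> : forall a k, sumn [seq s | _ <- iota a k] = (k * s)%N by [].
  by move=> a k; elim: k a => //= k IH a; rewrite IH mulSn.
rewrite size_inputs => j lt.
rewrite (nth_inputs _ (Ordinal lt)) castmxE /= mxE.
set j' := cast_ord _ _.
have -> : j = (tagnat.sig1 j' * s + tagnat.sig2 j')%N.
  by rewrite -Rank_val tagnat.sig2K.
rewrite (@nth_flatten_const _ 0 (fun t => slp_inputs (u *m (B ^+ t *m w))) s m 0) //;
  last by move=> i; rewrite size_inputs.
rewrite add0n (nth_inputs _ (tagnat.sig2 j')) mulmxA; congr (_ _ _); exact: val_inj.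
Qed.

Definition blk (y : 'cV[F]_(m * s)) (t : nat) : 'cV[F]_s :=
  \col_(r < s) nth 0 (slp_inputs y) (t * s + r).

Lemma blk_inputs y t : (t < m)%N ->
  slp_inputs (blk y t) = take s (drop (t * s) (slp_inputs y)).
Proof.
move=> tm; have le : (t * s + s <= m * s)%N by rewrite -mulSnr leq_mul2r tm orbT.
apply: (@eq_from_nth _ 0).
  by rewrite size_take size_drop !size_inputs; case: ltnP => //; lia.
rewrite size_inputs => r rs.
by rewrite (nth_inputs _ (Ordinal rs)) mxE nth_take // nth_drop.
Qed.

Lemma V_mul (B : 'M[F]_(m * s)) v (y : 'cV_(m * s)) :
  krylovV B v *m y = \sum_(t < m) B ^+ t *m (v *m blk y t).
Proof.
rewrite /krylovV.
have -> : y = castmx (sum_const_block m s, erefl 1%N)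
   (castmx (esym (sum_const_block m s), erefl 1%N) y) by rewrite castmxKV.
rewrite castmx_mulM -[X in _ *m X]submxcolK mul_mxrow_mxcol.
apply: eq_bigr => t _; rewrite mulmxA; congr (_ *m _).
apply/matrixP => r c; rewrite !mxE castmxE /= ord1.
have lt : (t * s + r < m * s)%N.
  have := ltn_ord (@tagnat.Rank m (fun _ => s) t r); rewrite Rank_val.
  by rewrite sum_const_block.
rewrite castmxKV (nth_inputs _ (Ordinal lt)); congr (y _ _); first by apply: val_inj; rewrite /= -Rank_val.
Qed.

End Mat.


Section Alg.
Variables (F : fieldType) (m s : nat).
Local Notation n := (m * s)%N.
Variables (B : 'M[F]_n) (u : 'M[F]_(s, n)) (v : 'M[F]_(n, s)).
Variables (PB Pu Pv PH : slp F).
Hypothesis PBok : slp_computes PB (fun w : 'cV_n => B *m w).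
Hypothesis Puok : slp_computes Pu (fun w : 'cV_n => u *m w).
Hypothesis Pvok : slp_computes Pv (fun x : 'cV_s => v *m x).
Local Notation H := (krylovU B u *m B *m krylovV B v).
Hypothesis PHok : slp_computes PH (fun y : 'cV_n => invmx H *m y).
Local Notation cb := (slp_cost PB).
Local Notation cu := (slp_cost Pu).
Local Notation cv := (slp_cost Pv).
Local Notation ch := (slp_cost PH).
Local Notation z := n.

Fixpoint ph1 (j N : nat) (cur : seq nat) : seq (instr F) * (seq nat * seq nat) :=
  match j with
  | 0 => ([::], ([::], cur))
  | j'.+1 =>
    let N1 := (N + n + cu + s)%N in
    let N2 := (N1 + n + cb + n)%N in
    let r := ph1 j' N2 (iota (N1 + n + cb) n) in
    (callc z N cur Pu ++ callc z N1 cur PB ++ r.1, (iota (N + n + cu) s ++ r.2.1, r.2.2))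
  end.

Lemma ph1_ok (w : 'cV_n) j : forall a (R : seq F) cur,
  (z < size R)%N -> nth 0 R z = 0 -> holds R cur (B ^+ a *m w) ->
  let r := ph1 j (size R) cur in
  size (run R r.1) = (size R + j * (3 * n + cu + cb + s))%N /\
  vals (run R r.1) r.2.1 (flatten [seq slp_inputs (u *m (B ^+ t *m w)) | t <- iota a j]) /\
  holds (run R r.1) r.2.2 (B ^+ (a + j) *m w).
Proof.
elim: j => [|j IH] a R cur zl z0 hc /=.
  by rewrite addn0 addn0; split=> //; split=> //.
have [s1 h1] := call_ok Puok zl z0 hc.
set R1 := run R _ in s1 h1.
have zl1 : (z < size R1)%N by rewrite s1; lia.
have z01 : nth 0 R1 z = 0 by rewrite nth_run_lt.
have [s2 h2] := call_ok PBok zl1 z01 (vals_run _ hc).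
rewrite -s1 run_cat -/R1 run_cat.
set R2 := run R1 _ in s2 h2 *.
have zl2 : (z < size R2)%N by rewrite s2; lia.
have z02 : nth 0 R2 z = 0 by rewrite nth_run_lt.
have eB : forall a (x : 'cV[F]_n), B *m (B ^+ a *m x) = B ^+ a.+1 *m x.
  by move=> a0 x; rewrite mulmxA exprS.
rewrite eB in h2.
have [s3 [v3 h3]] := IH _ _ _ zl2 z02 h2.
move: s3 v3 h3; rewrite s2 => s3 v3 h3.
split; first by rewrite s3 s1; lia.
split; last by rewrite -addSnnS.
by apply: vals_cat => //; apply: vals_run; rewrite /R2; apply: vals_run.
Qed.

Definition Sm (y : 'cV_n) (j : nat) : 'cV[F]_n :=
  \sum_(t < m - j) B ^+ t *m (v *m blk y (j + t)).

Lemma Sm_step y j : (j < m)%N -> Sm y j = B *m Sm y j.+1 + v *m blk y j.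
Proof.
move=> jm; rewrite /Sm.
have -> : (m - j = (m - j.+1).+1)%N by lia.
rewrite big_ord_recl /= expr0 mul1mx addn0 addrC mulmx_sumr; congr (_ + _).
by apply: eq_bigr => i _; rewrite /bump /= add1n -addSnnS exprS -mulmxE !mulmxA.
Qed.

Fixpoint ph3 (oy : seq nat) (j N : nat) (acc : seq nat) : seq (instr F) * seq nat :=
  match j with
  | 0 => ([::], acc)
  | j'.+1 =>
    let N1 := (N + n + cb + n)%N in
    let N2 := (N1 + s + cv + n)%N in
    let r := ph3 oy j' (N2 + n) (iota N2 n) in
    (callc z N acc PB ++ callc z N1 (take s (drop (j' * s) oy)) Pv ++
       addc F (iota (N + n + cb) n) (iota (N1 + s + cv) n) ++ r.1, r.2)
  end.

Lemma ph3_ok (y : 'cV_n) oy j : forall (R : seq F) acc,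
  (j < m)%N -> (z < size R)%N -> nth 0 R z = 0 -> holds R oy y ->
  holds R acc (Sm y j) ->
  let r := ph3 oy j (size R) acc in
  size (run R r.1) = (size R + j * (4 * n + cb + cv + s))%N /\
  holds (run R r.1) r.2 (Sm y 0).
Proof.
elim: j => [|j IH] R acc jm zl z0 hy ha /=; first by rewrite addn0.
have [s1 h1] := call_ok PBok zl z0 ha.
set R1 := run R _ in s1 h1.
have zl1 : (z < size R1)%N by rewrite s1; lia.
have z01 : nth 0 R1 z = 0 by rewrite nth_run_lt.
have hb : holds R1 (take s (drop (j * s) oy)) (blk y j).
  rewrite /holds blk_inputs; last by lia.
  by apply: vals_sub; apply: vals_run.
have [s2 h2] := call_ok Pvok zl1 z01 hb.
rewrite -s1 run_cat -/R1 run_cat.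
set R2 := run R1 _ in s2 h2 *.
have zl2 : (z < size R2)%N by rewrite s2; lia.
have z02 : nth 0 R2 z = 0 by rewrite nth_run_lt.
have h1' : holds R2 (iota (size R + z + cb) z) (B *m Sm y j.+1) by apply: vals_run.
have [s3 h3] := add_ok h1' h2.
rewrite run_cat.
set R3 := run R2 _ in s3 h3 *.
have zl3 : (z < size R3)%N by rewrite s3; lia.
have z03 : nth 0 R3 z = 0 by rewrite nth_run_lt.
have hy3 : holds R3 oy y by do 3 apply: vals_run.
rewrite -Sm_step in h3; last by lia.
have jm' : (j < m)%N by lia.
have [s4 h4] := IH R3 _ jm' zl3 z03 hy3 h3.
move: s4 h4; rewrite s3 s2 => s4 h4.
split; last by [].
by rewrite s4 s1; lia.
Qed.


Local Notation K1 := (3 * n + cu + cb + s)%N.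
Local Notation K3 := (4 * n + cb + cv + s)%N.

Definition mcode : seq (instr F) * seq nat :=
  let r1 := ph1 (m - 1) (n + 1) (iota 0 n) in
  let N1 := (n + 1 + (m - 1) * K1)%N in
  let Uo := r1.2.1 ++ iota (N1 + n + cu) s in
  let N2 := (N1 + n + cu + s)%N in
  let oy := iota (N2 + n + ch) n in
  let N3 := (N2 + n + ch + n)%N in
  let acc := iota (N3 + s + cv) n in
  let N4 := (N3 + s + cv + n)%N in
  let r3 := ph3 oy (m - 1) N4 acc in
  ([:: ICst 0] ++ r1.1 ++ callc z N1 r1.2.2 Pu ++ callc z N2 Uo PH ++
     callc z N3 (take s (drop ((m - 1) * s) oy)) Pv ++ r3.1, r3.2).

Lemma iota_last k : (0 < k)%N -> iota 0 k = iota 0 (k - 1) ++ [:: (k - 1)%N].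
Proof. by case: k => // k _; rewrite subSS subn0 -addn1 iotaD add0n. Qed.

Lemma final_eq (w : 'cV[F]_n) : B \in unitmx -> krylovU B u \in unitmx ->
  krylovV B v \in unitmx ->
  krylovV B v *m (invmx H *m (krylovU B u *m w)) = invmx B *m w.
Proof.
move=> hB hU hV.
have hH : H \in unitmx by rewrite !unitmx_mul hU hB hV.
have -> : krylovU B u *m w = H *m (invmx (krylovV B v) *m (invmx B *m w)).
  by rewrite -!mulmxA (mulKVmx hV) (mulKVmx hB).
by rewrite (mulKmx hH) (mulKVmx hV).
Qed.

Lemma main_ok (w : 'cV[F]_n) : (0 < m)%N -> B \in unitmx -> krylovU B u \in unitmx ->
  krylovV B v \in unitmx ->
  size (run (slp_inputs w) mcode.1) =
    (n + (1 + (m - 1) * K1 + (n + cu + s) + (n + ch + n) + (s + cv + n) + (m - 1) * K3))%N /\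
  holds (run (slp_inputs w) mcode.1) mcode.2 (invmx B *m w).
Proof.
move=> m0 hB hU hV.
set R0 := slp_inputs w.
have sR0 : size R0 = n by rewrite size_inputs.
rewrite /mcode /= -/R0.
set R0' := rcons R0 (step R0 (ICst 0)).
have sz0 : size R0' = (n + 1)%N by rewrite size_rcons sR0 addn1.
have zl0 : (z < size R0')%N by rewrite sz0 addn1.
have z00 : nth 0 R0' z = 0 by rewrite /R0' nth_rcons sR0 ltnn eqxx.
have hw : holds R0' (iota 0 n) (B ^+ 0 *m w).
  rewrite expr0 mul1mx; split.
    by apply/allP=> j; rewrite mem_iota sz0 add0n addn1 => /ltnW.
  rewrite /R0' -cats1.
  have := map_nth_iotaC [::] R0; rewrite /= sR0 => e.
  transitivity (map (nth 0 R0) (iota 0 n)); last exact: e.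
  by apply/eq_in_map => j; rewrite mem_iota /= nth_cat sR0 => ->.
rewrite -sz0 run_cat.
have [s1 [v1 h1]] := ph1_ok (m - 1) zl0 z00 hw.
set R1 := run R0' _ in s1 v1 h1 *.
rewrite -s1 run_cat -/R1.
have zl1 : (z < size R1)%N by rewrite s1; lia.
have z01 : nth 0 R1 z = 0 by rewrite nth_run_lt.
have [s2 h2] := call_ok Puok zl1 z01 h1.
set R2 := run R1 _ in s2 h2 *.
rewrite -s2 run_cat -/R2.
have zl2 : (z < size R2)%N by rewrite s2; lia.
have z02 : nth 0 R2 z = 0 by rewrite nth_run_lt.
have hU2 : holds R2 ((ph1 (m - 1) (size R0') (iota 0 z)).2.1 ++ iota (size R1 + z + cu) s)
   (krylovU B u *m w).
  rewrite /holds U_inputs (iota_last m0) map_cat flatten_cat /= cats0.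
  apply: vals_cat; first by apply: vals_run.
  by rewrite add0n in h2.
have [s3 h3] := call_ok PHok zl2 z02 hU2.
set R3 := run R2 _ in s3 h3 *.
rewrite -s3 run_cat -/R3.
set y := invmx H *m (krylovU B u *m w) in h3.
have zl3 : (z < size R3)%N by rewrite s3; lia.
have z03 : nth 0 R3 z = 0 by rewrite nth_run_lt.
have hb : holds R3 (take s (drop ((m - 1) * s) (iota (size R2 + z + ch) z))) (blk y (m - 1)).
  by rewrite /holds blk_inputs; [apply: vals_sub | lia].
have [s4 h4] := call_ok Pvok zl3 z03 hb.
set R4 := run R3 _ in s4 h4 *.
rewrite -s4.
have zl4 : (z < size R4)%N by rewrite s4; lia.
have z04 : nth 0 R4 z = 0 by rewrite nth_run_lt.
have hy4 : holds R4 (iota (size R2 + z + ch) z) y by apply: vals_run.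
have ha : holds R4 (iota (size R3 + s + cv) z) (Sm y (m - 1)).
  suff -> : Sm y (m - 1) = v *m blk y (m - 1) by [].
  rewrite /Sm (_ : (m - (m - 1) = 1)%N); last by lia.
  by rewrite big_ord1 expr0 mul1mx addn0.
have mm : (m - 1 < m)%N by lia.
have [s5 h5] := ph3_ok mm zl4 z04 hy4 ha.
split; first by rewrite s5 s4 s3 s2 s1 sz0; lia.
suff <- : Sm y 0 = invmx B *m w by [].
rewrite -(final_eq w hB hU hV) -/y V_mul /Sm subn0.
by apply: eq_bigr => t _; rewrite add0n.
Qed.

End Alg.


Lemma expn_mono c a b : (a <= b)%N -> (a ^ c <= b ^ c)%N.
Proof. by move=> ab; elim: c => // c IH; rewrite !expnS leq_mul. Qed.

Lemma lg_mono a b : (a <= b)%N -> (lg a <= lg b)%N.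
Proof. by move=> ab; rewrite /lg ltnS leq_trunc_log. Qed.

Lemma arith_core (m s C X mu cb cu cv ch : nat) :
  (0 < m)%N -> (0 < s)%N -> (1 <= X)%N -> (cb <= mu)%N ->
  (cu <= C * (m * s) * X)%N -> (cv <= C * (m * s) * X)%N ->
  (ch <= C * ((m * s) * s) * X)%N ->
  (m * s + (1 + (m - 1) * (3 * (m * s) + cu + cb + s) + (m * s + cu + s) +
     (m * s + ch + m * s) + (s + cv + m * s) + (m - 1) * (4 * (m * s) + cb + cv + s))
   <= m * s + (2 * (m - 1) * mu + (3 * C + 16) * ((m * s) * (m + s)) * X))%N.
Proof.
case: m => // m _ s0 X1 hb hu hv hh.
rewrite subSS subn0.
nia.
Qed.


Theorem mainTheorem4 :
  forall c C : nat, exists c' C' : nat,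
  forall (p : nat) (m s : nat) (mu : nat -> nat)
         (B : 'M['F_p]_(m * s)) (u : 'M['F_p]_(s, m * s)) (v : 'M['F_p]_(m * s, s)),
    prime p -> (0 < m)%N -> (0 < s)%N ->
    B \in unitmx ->
    krylovU B u \in unitmx ->
    krylovV B v \in unitmx ->
    (exists PB : slp 'F_p, slp_computes PB (fun w : 'cV_(m * s) => B *m w)
                           /\ (slp_cost PB <= mu (m * s)%N)%N) ->
    (exists Pu : slp 'F_p, slp_computes Pu (fun w : 'cV_(m * s) => u *m w)
                           /\ (slp_cost Pu <= C * (m * s) * lg (m * s) ^ c)%N) ->
    (exists Pv : slp 'F_p, slp_computes Pv (fun x : 'cV_s => v *m x)
                           /\ (slp_cost Pv <= C * (m * s) * lg (m * s) ^ c)%N) ->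
    (exists PH : slp 'F_p,
        slp_computes PH (fun y : 'cV_(m * s) =>
                           invmx (krylovU B u *m B *m krylovV B v) *m y)
        /\ (slp_cost PH <= C * ((m * s) * s) * lg ((m * s) * s) ^ c)%N) ->
    exists P : slp 'F_p,
      slp_computes P (fun w : 'cV_(m * s) => invmx B *m w)
      /\ (slp_cost P <= 2 * (m - 1) * mu (m * s)%N
                        + C' * ((m * s) * (m + s)) * lg ((m * s) * (m + s)) ^ c')%N.
Proof.
move=> c C; exists c, (3 * C + 16)%N.
move=> p m s mu B u v hp m0 s0 hB hU hV [PB [PBok cB]] [Pu [Puok cU]]
  [Pv [Pvok cV]] [PH [PHok cH]].
set mc := @mcode _ m s PB Pu Pv PH.
have MO := fun w => main_ok PBok Puok Pvok PHok w m0 hB hU hV.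
exists (SLP mc.1 mc.2); split.
  have [_ [_ e0]] := MO 0.
  have so : size mc.2 = (m * s)%N.
    by move: (congr1 size e0); rewrite size_map size_inputs.
  split=> // x i /=.
  have [_ [_ e]] := MO x.
  by rewrite -nth_inputs -e (nth_map 0%N) // so.
have [sz _] := MO 0.
rewrite size_run size_inputs in sz.
rewrite /slp_cost /=.
rewrite -(leq_add2l (m * s)) sz.
set X := (lg (m * s * (m + s)) ^ c)%N.
have X1 : (1 <= X)%N by rewrite expn_gt0.
have Ln : (lg (m * s) ^ c <= X)%N.
  by apply: expn_mono; apply: lg_mono; rewrite leq_pmulr // addn_gt0 m0.
have Lh : (lg (m * s * s) ^ c <= X)%N.
  by apply: expn_mono; apply: lg_mono; rewrite leq_mul2l leq_addl orbT.
apply: arith_core => //.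
- by apply: (leq_trans cU); rewrite leq_mul2l Ln orbT.
- by apply: (leq_trans cV); rewrite leq_mul2l Ln orbT.
- by apply: (leq_trans cH); rewrite leq_mul2l Lh orbT.
Qed.
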